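(* Let $A$ be a Prüfer domain with Noetherian prime spectrum (for example, a Dedekind domain), and let $B$ be an overring of $A$ finitely generated as an $A$-algebra. The following are equivalent: (1) $B$ is a localization of $A$; (2) $B$ is well-centered on $A$; (3) $B$ is almost well-centered on $A$.
   Context: For an integral domain $A$ with field of fractions $K$, an overring is a subring $B$ of $K$ containing $A$. $B$ is a localization of $A$ if $B=S^{-1}A$ for a multiplicatively closed set $S$ of nonzero elements of $A$. $B$ is well-centered on $A$ if for each $b\in B$ there is a unit $u$ of $B$ with $ub\in A$; $B$ is almost well-centered on $A$ if for each $b\in B$ there exist a positive integer $n$ and a unit $u$ of $B$ with $ub^n\in A$. *)

(* Defs.v *)
(* All rings are subrings of a fixed field K, represented as
   predicates (K -> Prop); K plays the role of the fraction field of A. *)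
From mathcomp Require Import all_boot all_algebra.
Set Implicit Arguments. Unset Strict Implicit. Unset Printing Implicit Defensive.
Import GRing.Theory.
Local Open Scope ring_scope.

Section Defs.
Variable K : fieldType.

(* R is a (unital) subring of K; in particular R is an integral domain. *)
Definition subring (R : K -> Prop) : Prop :=
  R 0 /\ R 1 /\ (forall x y, R x -> R y -> R (x - y)) /\
  (forall x y, R x -> R y -> R (x * y)).

Definition is_fraction_field (A : K -> Prop) : Prop :=
  forall x : K, exists a b, A a /\ A b /\ b != 0 /\ x = a / b.

Definition overring (A B : K -> Prop) : Prop :=
  subring B /\ (forall x, A x -> B x).

Definition ideal (A I : K -> Prop) : Prop :=
  (forall x, I x -> A x) /\ I 0 /\ (forall x y, I x -> I y -> I (x + y)) /\
  (forall a x, A a -> I x -> I (a * x)).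

Definition fg_ideal (A I : K -> Prop) : Prop :=
  exists (n : nat) (g : 'I_n -> K), (forall i, A (g i)) /\
    (forall x, I x <-> exists c : 'I_n -> K, (forall i, A (c i)) /\
                                    x = \sum_(i < n) c i * g i).

Definition prod_set (I J : K -> Prop) (x : K) : Prop :=
  exists (n : nat) (a b : 'I_n -> K), (forall i, I (a i) /\ J (b i)) /\
    x = \sum_(i < n) a i * b i.

Definition invertible (A I : K -> Prop) : Prop :=
  exists J : K -> Prop,
    J 0 /\ (forall x y, J x -> J y -> J (x + y)) /\
    (forall a x, A a -> J x -> J (a * x)) /\
    (forall x, prod_set I J x <-> A x).

Definition prufer (A : K -> Prop) : Prop :=
  forall I, ideal A I -> fg_ideal A I -> (exists x, I x /\ x != 0) ->
    invertible A I.

(* Noetherian prime spectrum: Spec A is a Noetherian space, i.e. (closed sets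
   of Spec A <-> radical ideals, order-reversing) ACC on radical ideals. *)
Definition radical_ideal (A I : K -> Prop) : Prop :=
  ideal A I /\ (forall x (n : nat), A x -> I (x ^+ n) -> I x).

Definition noetherian_spectrum (A : K -> Prop) : Prop :=
  forall I : nat -> K -> Prop,
    (forall n, radical_ideal A (I n)) ->
    (forall n x, I n x -> I n.+1 x) ->
    exists N : nat, forall n x, (N <= n)%N -> I n x -> I N x.

Inductive adjoin (A : K -> Prop) (s : seq K) : K -> Prop :=
  | adj_base a : A a -> adjoin A s a
  | adj_gen x : x \in s -> adjoin A s x
  | adj_opp x : adjoin A s x -> adjoin A s (- x)
  | adj_add x y : adjoin A s x -> adjoin A s y -> adjoin A s (x + y)
  | adj_mul x y : adjoin A s x -> adjoin A s y -> adjoin A s (x * y).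

Definition fg_algebra (A B : K -> Prop) : Prop :=
  exists s : seq K, forall x, B x <-> adjoin A s x.

Definition unit_of (B : K -> Prop) (u : K) : Prop :=
  B u /\ u != 0 /\ B u^-1.

Definition localization_of (A B : K -> Prop) : Prop :=
  exists S : K -> Prop,
    (forall s, S s -> A s /\ s != 0) /\ S 1 /\
    (forall s t, S s -> S t -> S (s * t)) /\
    (forall x, B x <-> exists a s, A a /\ S s /\ x = a / s).

Definition well_centered (A B : K -> Prop) : Prop :=
  forall b, B b -> exists u, unit_of B u /\ A (u * b).

Definition almost_well_centered (A B : K -> Prop) : Prop :=
  forall b, B b -> exists (n : nat) u, (0 < n)%N /\ unit_of B u /\ A (u * b ^+ n).

End Defs.

(* Main.v *)
Require Import Defs.
From mathcomp Require Import all_boot all_algebra.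
From mathcomp Require Import ring zify.
From Stdlib Require Import Classical ClassicalEpsilon.
Set Implicit Arguments. Unset Strict Implicit. Unset Printing Implicit Defensive.
Import GRing.Theory.
Local Open Scope ring_scope.

Section Aux.
Variable K : fieldType.
Implicit Types (A B I J P Q R : K -> Prop) (x y z a b c s t u : K).

Lemma sr0 R : subring R -> R 0. Proof. by case. Qed.
Lemma sr1 R : subring R -> R 1. Proof. by case=> _ []. Qed.
Lemma srB R x y : subring R -> R x -> R y -> R (x - y).
Proof. by case=> _ [] _ [] H _; apply: H. Qed.
Lemma srM R x y : subring R -> R x -> R y -> R (x * y).
Proof. by case=> _ [] _ [] _ H; apply: H. Qed.
Lemma srN R x : subring R -> R x -> R (- x).
Proof. move=> HR Hx; rewrite -sub0r; apply: (srB HR) => //; exact: sr0. Qed.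
Lemma srD R x y : subring R -> R x -> R y -> R (x + y).
Proof. move=> HR Hx Hy; rewrite -[y]opprK; apply: (srB HR) => //; exact: srN. Qed.
Lemma srX R x n : subring R -> R x -> R (x ^+ n).
Proof.
move=> HR Hx; elim: n => [|n IH]; first by rewrite expr0; exact: sr1.
by rewrite exprS; apply: (srM HR).
Qed.

Lemma id_sub A I x : ideal A I -> I x -> A x. Proof. by case=> H _; apply: H. Qed.
Lemma id0 A I : ideal A I -> I 0. Proof. by case=> _ []. Qed.
Lemma idD A I x y : ideal A I -> I x -> I y -> I (x + y).
Proof. by case=> _ [] _ [] H _; apply: H. Qed.
Lemma idM A I a x : ideal A I -> A a -> I x -> I (a * x).
Proof. by case=> _ [] _ [] _ H; apply: H. Qed.
Lemma idMr A I a x : ideal A I -> A a -> I x -> I (x * a).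
Proof. by move=> HI Ha Hx; rewrite mulrC; apply: (idM HI). Qed.
Lemma idX A I x n : subring A -> ideal A I -> I x -> (0 < n)%N -> I (x ^+ n).
Proof.
move=> HA HI Hx; case: n => // n _; rewrite exprSr; apply: (idM HI) => //.
apply: (srX _ HA) => //; exact: id_sub Hx.
Qed.

Lemma natmul_closed (Ip : K -> Prop) z k :
  Ip 0 -> (forall x y, Ip x -> Ip y -> Ip (x + y)) -> Ip z -> Ip (z *+ k).
Proof.
move=> H0 HD Hz; elim: k => [|k IH]; first by rewrite mulr0n.
by rewrite mulrS; apply: HD.
Qed.

Lemma pow_sum A (Ip : K -> Prop) : subring A -> Ip 0 ->
  (forall x y, Ip x -> Ip y -> Ip (x + y)) ->
  (forall a x, A a -> Ip x -> Ip (a * x)) ->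
  forall x y n m, A x -> A y -> Ip (x ^+ n) -> Ip (y ^+ m) ->
  Ip ((x + y) ^+ (n + m)).
Proof.
move=> HA H0 HD HM x y n m Hx Hy Hxn Hym.
rewrite exprDn; apply: big_ind => // [[i /= Hi]] _.
apply: natmul_closed => //.
case: (ltnP i m) => Him.
  have -> : (n + m - i = (n + m - i - n) + n)%N by rewrite subnK //; lia.
  rewrite exprD mulrAC; apply: (HM) => //; apply: (srM HA); exact: (srX _ HA).
rewrite -[in y ^+ i](subnK Him) exprD mulrA; apply: (HM) => //.
by apply: (srM HA); exact: (srX _ HA).
Qed.

Lemma prufer_t A (HA : subring A) (Hff : is_fraction_field A) (Hpr : prufer A) y :
  y != 0 -> exists t, A t /\ A (t * y) /\ A ((1 - t) / y).
Proof.
move=> y0; case: (Hff y) => a [b [Ha [Hb [b0 Ey]]]].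
have a0 : a != 0 by apply: contraNneq y0 => a0; rewrite Ey a0 mul0r.
pose I := fun x => exists r1 r2, A r1 /\ A r2 /\ x = r1 * a + r2 * b.
have HI : ideal A I.
  split; first by move=> x [r1 [r2 [H1 [H2 ->]]]]; apply: (srD HA) => //; apply: (srM HA).
  split; first by exists 0, 0; split; [exact: sr0|split; [exact: sr0|rewrite !mul0r addr0]].
  split.
    move=> x z [r1 [r2 [H1 [H2 ->]]]] [r3 [r4 [H3 [H4 ->]]]].
    exists (r1 + r3), (r2 + r4); split; first exact: (srD HA).
    split; first exact: (srD HA). by rewrite !mulrDl; ring.
  move=> c x Hc [r1 [r2 [H1 [H2 ->]]]].
  exists (c * r1), (c * r2); split; first exact: (srM HA).
  split; first exact: (srM HA). by ring.
have Hfg : fg_ideal A I.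
  exists 2%N, (fun i : 'I_2 => if val i == 0%N then a else b); split.
    by move=> [[|i] Hi].
  move=> x; split.
    move=> [r1 [r2 [H1 [H2 ->]]]].
    exists (fun i : 'I_2 => if val i == 0%N then r1 else r2); split.
      by move=> [[|i] Hi].
    by rewrite !big_ord_recl big_ord0 addr0 /=.
  move=> [c [Hc ->]]; exists (c ord0), (c (lift ord0 ord0)).
  by rewrite !big_ord_recl big_ord0 addr0 /=.
have Hnz : exists x, I x /\ x != 0.
  exists a; split => //; exists 1, 0; split; first exact: sr1.
  split; first exact: sr0. by rewrite mul1r mul0r addr0.
case: (Hpr I HI Hfg Hnz) => J [J0 [JD [JM HJ]]].
have prod1 : forall x z, I x -> J z -> A (x * z).
  move=> x z Hx Hz; apply/HJ; exists 1%N, (fun=> x), (fun=> z); split => //.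
  by rewrite big_ord1.
have key : forall n (al be : 'I_n -> K), (forall i, I (al i) /\ J (be i)) ->
    exists j1 j2, J j1 /\ J j2 /\ \sum_(i < n) al i * be i = a * j1 + b * j2.
  elim=> [|n IH] al be H.
    by exists 0, 0; split => //; split => //; rewrite big_ord0 !mulr0 addr0.
  rewrite big_ord_recr /=.
  case: (IH (fun i => al (widen_ord (leqnSn n) i)) (fun i => be (widen_ord (leqnSn n) i))).
    by move=> i; apply: H.
  move=> j1 [j2 [Hj1 [Hj2 ->]]].
  case: (H ord_max) => [[r1 [r2 [H1 [H2 ->]]]] Hbe].
  exists (j1 + r1 * be ord_max), (j2 + r2 * be ord_max).
  split; first by apply: JD => //; apply: JM.
  split; first by apply: JD => //; apply: JM.
  by ring.
have := (HJ 1).2 (sr1 HA) => -[n [al [be [H E]]]].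
case: (key n al be H) => j1 [j2 [Hj1 [Hj2 E2]]].
rewrite E2 in E.
have Ia : I a by exists 1, 0; split; [exact: sr1|split; [exact: sr0|rewrite mul1r mul0r addr0]].
have Ib : I b by exists 0, 1; split; [exact: sr0|split; [exact: sr1|rewrite mul1r mul0r add0r]].
exists (b * j2); split; first exact: prod1.
split.
  have -> : b * j2 * y = a * j2 by rewrite Ey; field.
  exact: prod1.
have -> : (1 - b * j2) / y = b * j1.
  have -> : 1 - b * j2 = a * j1 by rewrite E; ring.
  by rewrite Ey; field; apply/andP.
exact: prod1.
Qed.

Definition primeI A P := ideal A P /\ ~ P 1 /\
  (forall x y, A x -> A y -> P (x * y) -> P x \/ P y).
Definition inAP A P y := exists s, A s /\ ~ P s /\ A (s * y).

Section Loc.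
Variables (A : K -> Prop) (HA : subring A) (Hff : is_fraction_field A) (Hpr : prufer A).

Lemma prime_pow P x n : primeI A P -> A x -> P (x ^+ n) -> P x.
Proof.
move=> [HP [P1 PM]] Hx; elim: n => [|n IH]; first by rewrite expr0.
rewrite exprS => H; case: (PM _ _ Hx (srX _ HA Hx) H) => //.
Qed.

Lemma prime_mul_not P x y : primeI A P -> A x -> A y -> ~ P x -> ~ P y -> ~ P (x * y).
Proof. by move=> [HP [P1 PM]] Hx Hy nx ny /(PM _ _ Hx Hy) []. Qed.

Lemma prime_pow_not P x n : primeI A P -> A x -> ~ P x -> ~ P (x ^+ n).
Proof. by move=> HP Hx nx /(prime_pow HP Hx). Qed.

Lemma inAP_A P x : primeI A P -> A x -> inAP A P x.
Proof. by move=> [_ [P1 _]] Hx; exists 1; split; [exact: sr1|split=> //; rewrite mul1r]. Qed.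

Lemma inAP_B P x y : primeI A P -> inAP A P x -> inAP A P y -> inAP A P (x - y).
Proof.
move=> HP [s1 [H1 [N1 E1]]] [s2 [H2 [N2 E2]]]; exists (s1 * s2); split; first exact: (srM HA).
split; first exact: prime_mul_not.
have -> : s1 * s2 * (x - y) = s2 * (s1 * x) - s1 * (s2 * y) by ring.
by apply: (srB HA) => //; apply: (srM HA).
Qed.

Lemma inAP_M P x y : primeI A P -> inAP A P x -> inAP A P y -> inAP A P (x * y).
Proof.
move=> HP [s1 [H1 [N1 E1]]] [s2 [H2 [N2 E2]]]; exists (s1 * s2); split; first exact: (srM HA).
split; first exact: prime_mul_not.
have -> : s1 * s2 * (x * y) = (s1 * x) * (s2 * y) by ring.
exact: (srM HA).
Qed.

Lemma inAP_X P x n : primeI A P -> inAP A P x -> inAP A P (x ^+ n).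
Proof.
move=> HP Hx; elim: n => [|n IH]; first by rewrite expr0; apply: inAP_A => //; exact: sr1.
by rewrite exprS; apply: inAP_M.
Qed.

Lemma V1 P y : primeI A P -> ~ inAP A P y ->
  y != 0 /\ exists s, A s /\ ~ P s /\ P (s / y).
Proof.
move=> HP ny.
have y0 : y != 0.
  apply/negP => /eqP y0; apply: ny; rewrite y0; apply: inAP_A => //; exact: sr0.
split => //.
case: (prufer_t HA Hff Hpr y0) => t [Ht [Hty Hty']].
have Pt : P t.
  apply: NNPP => nt; apply: ny; by exists t.
have n1t : ~ P (1 - t).
  move=> H; case: HP => [HI [P1 _]]; apply: P1.
  have -> : 1 = t + (1 - t) by ring.
  exact: (idD HI).
exists (1 - t); split; first by apply: (srB HA) => //; exact: sr1.
split => //.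
apply: NNPP => H; apply: ny; exists ((1 - t) / y); split => //; split => //.
by rewrite mulrAC -mulrA divff // mulr1; apply: (srB HA) => //; exact: sr1.
Qed.

Lemma Ppow P w n : primeI A P -> P w -> (0 < n)%N -> P (w ^+ n).
Proof. by move=> [HI _] Hw; apply: (idX HA HI). Qed.

Lemma not_inAP_X P y m : primeI A P -> ~ inAP A P y -> (0 < m)%N -> ~ inAP A P (y ^+ m).
Proof.
move=> HP ny m0 [c [Hc [nc Ec]]].
case: (V1 HP ny) => y0 [s [Hs [ns Ps]]].
have : P (c * s ^+ m).
  have -> : c * s ^+ m = (c * y ^+ m) * (s / y) ^+ m.
    by rewrite exprMn exprVn; field; rewrite expf_neq0.
  case: (HP) => HI _; apply: (idM HI) => //; exact: Ppow.
have := prime_mul_not HP Hc (srX _ HA Hs) nc (prime_pow_not (n:=m) HP Hs ns); tauto.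
Qed.

Lemma uniq_bad P b y m1 m2 : primeI A P -> ~ inAP A P b -> (0 < m1)%N -> (m1 < m2)%N ->
  inAP A P (b + y ^+ m1) -> inAP A P (b + y ^+ m2) -> False.
Proof.
move=> HP nb m10 m12 H1 H2.
case: (classic (inAP A P y)) => Hy.
  apply: nb; have -> : b = (b + y ^+ m1) - y ^+ m1 by ring.
  by apply: inAP_B => //; apply: inAP_X.
case: (V1 HP Hy) => y0 [s [Hs [ns Ps]]].
have := inAP_B HP H2 H1; have -> : b + y ^+ m2 - (b + y ^+ m1) = y ^+ m2 - y ^+ m1 by ring.
move=> [c [Hc [nc Ec]]].
have [d Ed] : exists d, m2 = (m1 + d.+1)%N by exists (m2 - m1).-1; lia.
subst m2.
have E : c * s ^+ (m1 + d.+1) = (c * (y ^+ (m1 + d.+1) - y ^+ m1)) * (s / y) ^+ (m1 + d.+1)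
     + (c * s ^+ m1) * (s / y) ^+ d.+1.
  rewrite !exprMn !exprVn !exprD; field.
  by rewrite !expf_neq0.
have : P (c * s ^+ (m1 + d.+1)).
  rewrite E; case: (HP) => HI _; apply: (idD HI).
    by apply: (idM HI) => //; by apply: Ppow => //; rewrite addnS.
  apply: (idM HI); first by apply: (srM HA) => //; apply: (srX _ HA).
  exact: Ppow.
have := prime_mul_not HP Hc (srX _ HA Hs) nc (prime_pow_not (n:=(m1 + d.+1)%N) HP Hs ns); tauto.
Qed.

End Loc.

Section Noeth.
Variables (A : K -> Prop) (HA : subring A) (HN : noetherian_spectrum A).

Lemma noeth_ind (Pr : (K -> Prop) -> Prop) :
  (forall J, radical_ideal A J ->
     (forall J', radical_ideal A J' -> (forall x, J x -> J' x) ->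
        (exists x, J' x /\ ~ J x) -> Pr J') -> Pr J) ->
  forall J, radical_ideal A J -> Pr J.
Proof.
move=> IH J0 HJ0; apply: NNPP => nP0.
pose good J := radical_ideal A J /\ ~ Pr J.
pose Q J J' := good J' /\ (forall x, J x -> J' x) /\ exists x, J' x /\ ~ J x.
pose nxt J := epsilon (inhabits J0) (Q J).
have step : forall J, good J -> Q J (nxt J).
  move=> J [HJ nJ]; apply: (epsilon_spec (inhabits J0) (Q J)).
  apply: NNPP => H; apply: nJ; apply: IH => // J' HJ' sub str.
  apply: NNPP => nJ'; apply: H; exists J'; split => //.
pose I n := iter n nxt J0.
have gI : forall n, good (I n).
  by elim=> [|n IHn]; [split | exact: (step _ IHn).1].
case: (@HN I) => [n|n x|N HNN].
- exact: (gI n).1.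
- exact: (step _ (gI n)).2.1.
case: (step _ (gI N)) => _ [_ [x [H1 H2]]].
by apply: H2; apply: (HNN N.+1 x (leqnSn N)).
Qed.

Lemma decomp J : radical_ideal A J -> exists L : list (K -> Prop),
  (forall P, List.In P L -> primeI A P) /\
  (forall x, J x <-> A x /\ forall P, List.In P L -> P x).
Proof.
move: J; apply: noeth_ind => J [HJ HJr] IH.
case: (classic (J 1)) => J1.
  exists nil; split => // x; split.
    by move=> Jx; split => //; exact: (id_sub HJ Jx).
  by move=> [Ax _]; rewrite -[x]mulr1; apply: (idM HJ).
case: (classic (forall x y, A x -> A y -> J (x * y) -> J x \/ J y)) => Jp.
  exists [:: J]; split; first by move=> P [<-|[]].
  move=> x; split; first by move=> Jx; split; [exact: (id_sub HJ Jx)|move=> P [<-|[]]].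
  by move=> [_ H]; apply: H; left.
have [x [y [Ax [Ay [Jxy [nx ny]]]]]] :
    exists x y, A x /\ A y /\ J (x * y) /\ ~ J x /\ ~ J y.
  apply: NNPP => H; apply: Jp => x y Ax Ay Jxy; apply: NNPP => H2; apply: H.
  exists x, y; tauto.
pose rad a := fun z => A z /\ exists n j r, J j /\ A r /\ z ^+ n = j + r * a.
have Hrad : forall a, A a -> radical_ideal A (rad a).
  move=> a Aa; split; [split; [|split; [|split]]|].
  - by move=> z [].
  - split; first exact: sr0.
    exists 1%N, 0, 0; split; first exact: (id0 HJ).
    by split; [exact: sr0|rewrite expr1 mul0r addr0].
  - move=> z w [Az [n [j [r [Jj [Ar E]]]]]] [Aw [m [j' [r' [Jj' [Ar' E']]]]]].
    split; first exact: (srD HA).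
    pose Ip := fun v => exists j r, J j /\ A r /\ v = j + r * a.
    have : Ip ((z + w) ^+ (n + m)).
      apply: (pow_sum HA) => //.
      + exists 0, 0; split; first exact: (id0 HJ).
        by split; [exact: sr0|rewrite mul0r addr0].
      + move=> v1 v2 [j1 [r1 [J1_ [A1 ->]]]] [j2 [r2 [J2 [A2 ->]]]].
        exists (j1 + j2), (r1 + r2); split; first exact: (idD HJ).
        by split; [exact: srD|ring].
      + move=> c v Ac [j1 [r1 [J1_ [A1 ->]]]].
        exists (c * j1), (c * r1); split; first exact: (idM HJ).
        by split; [exact: srM|ring].
      + by exists j, r.
      + by exists j', r'.
    by move=> [j1 [r1 [J1_ [A1 E1]]]]; exists (n + m)%N, j1, r1.
  - move=> c z Ac [Az [n [j [r [Jj [Ar E]]]]]].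
    split; first exact: (srM HA).
    exists n, (c ^+ n * j), (c ^+ n * r); split; first by apply: (idM HJ) => //; exact: (srX _ HA).
    split; first by apply: (srM HA) => //; exact: (srX _ HA).
    by rewrite exprMn E; ring.
  - move=> z k Az [_ [n [j [r [Jj [Ar E]]]]]]; split => //.
    by exists (k * n)%N, j, r; rewrite exprM.
have Jsub : forall a, A a -> forall z, J z -> rad a z.
  move=> a Aa z Jz; split; first exact: (id_sub HJ Jz).
  exists 1%N, z, 0; split => //; split; [exact: sr0|by rewrite expr1 mul0r addr0].
have Jsa : forall a, A a -> rad a a.
  move=> a Aa; split => //; exists 1%N, 0, 1; split; first exact: (id0 HJ).
  by split; [exact: sr1|rewrite expr1 mul1r add0r].
case: (IH (rad x) (Hrad x Ax) (Jsub x Ax)); first by exists x; split => //; exact: Jsa.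
move=> Lx [Px Ex].
case: (IH (rad y) (Hrad y Ay) (Jsub y Ay)); first by exists y; split => //; exact: Jsa.
move=> Ly [Py Ey].
exists (Lx ++ Ly); split.
  by move=> P H; case: (List.in_app_or _ _ _ H) => ?; [apply: Px|apply: Py].
move=> z; split.
  move=> Jz; split; first exact: (id_sub HJ Jz).
  move=> P H; case: (List.in_app_or _ _ _ H) => HP.
    by have := (Ex z).1 (Jsub x Ax z Jz) => -[_]; apply.
  by have := (Ey z).1 (Jsub y Ay z Jz) => -[_]; apply.
move=> [Az H].
have := (Ex z).2 (conj Az (fun P HP => H P (List.in_or_app _ _ _ (or_introl HP)))).
move=> [_ [n [j [r [Jj [Ar E]]]]]].
have := (Ey z).2 (conj Az (fun P HP => H P (List.in_or_app _ _ _ (or_intror HP)))).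
move=> [_ [m [j' [r' [Jj' [Ar' E']]]]]].
apply: (HJr z (n + m)%N Az).
have -> : z ^+ (n + m) = j * (j' + r' * y) + r * (x * j') + (r * r') * (x * y).
  by rewrite exprD E E'; ring.
apply: (idD HJ); first apply: (idD HJ).
- by apply: (idMr HJ) => //; apply: (srD HA); [exact: (id_sub HJ Jj')|exact: (srM HA)].
- by apply: (idM HJ) => //; apply: (idM HJ).
- by apply: (idM HJ) => //; exact: (srM HA).
Qed.

Lemma prime_in_list (L : list (K -> Prop)) Q :
  primeI A Q -> (forall P, List.In P L -> primeI A P) ->
  (forall x, A x -> (forall P, List.In P L -> P x) -> Q x) ->
  exists P, List.In P L /\ forall x, P x -> Q x.
Proof.
move=> HQ HL HR; apply: NNPP => H.
have : exists x, A x /\ (forall P, List.In P L -> P x) /\ ~ Q x.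
  elim: L HL HR H => [|P L IHL] HL HR H.
    exists 1; split; first exact: sr1.
    by split => //; case: HQ => _ [].
  have [p [Pp nQp]] : exists p, P p /\ ~ Q p.
    apply: NNPP => H2; apply: H; exists P; split; first by left.
    move=> z Pz; apply: NNPP => nz; apply: H2; by exists z.
  case: IHL.
  - by move=> P' HP'; apply: HL; right.
  - move=> z Az Hz.
    have HP : primeI A P by apply: HL; left.
    have : Q (p * z).
      apply: HR; first by apply: (srM HA) => //; exact: (id_sub HP.1 Pp).
      move=> P' [<-|HP']; first by apply: (idMr HP.1).
      apply: (idM (HL P' (or_intror HP')).1); first exact: (id_sub HP.1 Pp).
      exact: Hz.
    case: (HQ) => _ [_ QM] /(QM _ _ (id_sub HP.1 Pp) Az) [] // Qp.
  - move=> [P' [HP' sub]]; apply: H; exists P'; split => //; by right.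
  move=> x [Ax [Hx nQx]].
  have HP : primeI A P by apply: HL; left.
  exists (p * x); split; first by apply: (srM HA) => //; exact: (id_sub HP.1 Pp).
  split.
    move=> P' [<-|HP']; first by apply: (idMr HP.1).
    apply: (idM (HL P' (or_intror HP')).1); first exact: (id_sub HP.1 Pp).
    exact: Hx.
  exact: (prime_mul_not HQ (id_sub HP.1 Pp) Ax nQp nQx).
move=> [x [Ax [Hx nQx]]]; apply: nQx; exact: HR.
Qed.
End Noeth.

Section Main.
Variables (A B : K -> Prop) (HA : subring A) (Hff : is_fraction_field A)
  (Hpr : prufer A) (HN : noetherian_spectrum A) (Hov : overring A B)
  (Hfg : fg_algebra A B).

Let HB : subring B := Hov.1.
Let AB : forall x, A x -> B x := Hov.2.

Definition Rd := fun d => A d /\ forall b, B b -> exists m, A (d ^+ m * b).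

Lemma R_rad : radical_ideal A Rd.
Proof.
split; [split; [|split; [|split]]|].
- by move=> z [].
- split; first exact: (sr0 HA).
  by move=> b _; exists 1%N; rewrite expr1 mul0r; exact: (sr0 HA).
- move=> x y [Ax Hx] [Ay Hy]; split; first exact: (srD HA).
  move=> b Bb; case: (Hx b Bb) => m Hm; case: (Hy b Bb) => k Hk.
  exists (m + k)%N.
  apply: (pow_sum (Ip := fun v => A (v * b)) HA) => //.
  + by rewrite mul0r; exact: (sr0 HA).
  + by move=> v w Hv Hw; rewrite mulrDl; apply: (srD HA).
  + by move=> c v Ac Hv; rewrite -mulrA; apply: (srM HA).
- move=> c x Ac [Ax Hx]; split; first exact: (srM HA).
  move=> b Bb; case: (Hx b Bb) => m Hm; exists m.
  rewrite exprMn -mulrA; apply: (srM HA) => //; exact: (srX _ HA).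
- move=> x n Ax [_ Hx]; split => // b Bb; case: (Hx b Bb) => m Hm.
  by exists (n * m)%N; rewrite exprM.
Qed.

Lemma adj_pow c (s : seq K) : A c -> (forall g, g \in s -> A (c * g)) ->
  forall b, adjoin A s b -> exists m, A (c ^+ m * b).
Proof.
move=> Ac Hg b; elim.
- by move=> a Ha; exists 0%N; rewrite expr0 mul1r.
- by move=> x Hx; exists 1%N; rewrite expr1; apply: Hg.
- by move=> x _ [m Hm]; exists m; rewrite mulrN; apply: (srN HA).
- move=> x y _ [m1 H1] _ [m2 H2]; exists (m1 + m2)%N.
  have -> : c ^+ (m1 + m2) * (x + y) = c ^+ m2 * (c ^+ m1 * x) + c ^+ m1 * (c ^+ m2 * y).
    by rewrite exprD; ring.
  by apply: (srD HA); apply: (srM HA) => //; exact: (srX _ HA).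
- move=> x y _ [m1 H1] _ [m2 H2]; exists (m1 + m2)%N.
  have -> : c ^+ (m1 + m2) * (x * y) = (c ^+ m1 * x) * (c ^+ m2 * y).
    by rewrite exprD; ring.
  exact: (srM HA).
Qed.

Lemma gen_notin P : primeI A P -> (forall z, Rd z -> P z) ->
  exists y, B y /\ ~ inAP A P y.
Proof.
move=> HP HR; apply: NNPP => H.
have H' : forall y, B y -> inAP A P y.
  by move=> y By; apply: NNPP => ny; apply: H; exists y.
case: Hfg => s Hs.
have : forall s' : seq K, (forall g, g \in s' -> B g) ->
    exists c, A c /\ ~ P c /\ forall g, g \in s' -> A (c * g).
  elim=> [|g s' IH] Hs'.
    exists 1; split; first exact: (sr1 HA).
    by split => //; case: HP => _ [].
  case: IH => [g' Hg'|c [Ac [nc Hc]]].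
    by apply: Hs'; rewrite in_cons Hg' orbT.
  case: (H' g (Hs' g (mem_head _ _))) => cg [Acg [ncg Ecg]].
  exists (cg * c); split; first exact: (srM HA).
  split; first exact: (prime_mul_not HP).
  move=> g'; rewrite in_cons => /orP [/eqP ->|Hg'].
    by rewrite mulrAC; apply: (srM HA).
  by rewrite -mulrA; apply: (srM HA) => //; apply: Hc.
move=> /(_ s) [g Hg|c [Ac [nc Hc]]]; first by apply/Hs; apply: adj_gen.
apply: nc; apply: HR; split => // b Bb.
by apply: (adj_pow Ac Hc); apply/Hs.
Qed.

Lemma evt (L : list (K -> Prop)) b y :
  (forall Q, List.In Q L -> primeI A Q /\ ~ inAP A Q b) ->
  exists M, (0 < M)%N /\ forall m, (M <= m)%N ->
    forall Q, List.In Q L -> ~ inAP A Q (b + y ^+ m).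
Proof.
elim: L => [|Q L IH] H; first by exists 1%N.
case: IH => [Q' HQ'|M [M0 HM]]; first by apply: H; right.
case: (H Q (or_introl erefl)) => HQ nb.
have [M1 [M10 HM1]] : exists M1, (0 < M1)%N /\ forall m, (M1 <= m)%N -> ~ inAP A Q (b + y ^+ m).
  case: (classic (exists m0, (0 < m0)%N /\ inAP A Q (b + y ^+ m0))).
    move=> [m0 [m00 Hm0]]; exists m0.+1; split => // m Hm Hin.
    exact: (uniq_bad HA Hff Hpr HQ nb m00 Hm Hm0 Hin).
  move=> Hno; exists 1%N; split => // m Hm Hin; apply: Hno; by exists m.
exists (maxn M M1); split; first by rewrite leq_max M0.
move=> m Hm Q' [<-|HQ'].
  by apply: HM1; apply: leq_trans Hm; rewrite leq_maxr.
by apply: HM => //; apply: leq_trans Hm; rewrite leq_maxl.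
Qed.

Lemma avoid (L : list (K -> Prop)) :
  (forall P, List.In P L -> primeI A P /\ exists y, B y /\ ~ inAP A P y) ->
  exists b, B b /\ forall P, List.In P L -> ~ inAP A P b.
Proof.
elim: L => [|P L IH] H; first by exists 0; split => //; exact: (sr0 HB).
case: IH => [P' HP'|b' [Bb' Hb']]; first by apply: H; right.
case: (H P (or_introl erefl)) => HP [y [By ny]].
case: (classic (inAP A P b')) => Hb'P; last first.
  by exists b'; split => // P' [<-|HP'] //; apply: Hb'.
case: (@evt L b' y) => [Q HQ|M [M0 HM]].
  by split; [exact: (H Q (or_intror HQ)).1 | exact: Hb'].
exists (b' + y ^+ M); split; first by apply: (srD HB) => //; exact: (srX _ HB).
move=> P' [<-|HP']; last by apply: HM.
move=> Hin; apply: (not_inAP_X HA Hff Hpr HP ny M0).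
have -> : y ^+ M = (b' + y ^+ M) - b' by ring.
exact: (inAP_B HA HP).
Qed.

Lemma awc_loc : almost_well_centered A B -> localization_of A B.
Proof.
move=> Hawc.
case: (decomp HA HN R_rad) => L [HLp HLe].
have HL : forall P, List.In P L -> primeI A P /\ exists y, B y /\ ~ inAP A P y.
  move=> P HP; split; first exact: HLp.
  apply: gen_notin; first exact: HLp.
  by move=> z Rz; have := (HLe z).1 Rz => -[_]; apply.
case: (avoid HL) => b [Bb Hb].
case: (Hawc b Bb) => n [u [n0 [[Bu [u0 Bui]] Aub]]].
have key : forall Q, primeI A Q -> (exists P, List.In P L /\ forall x, P x -> Q x) ->
    exists s, A s /\ ~ Q s /\ Q (s ^+ n * u).
  move=> Q HQ [P [HP sub]].
  have nbQ : ~ inAP A Q b.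
    move=> [s [As [ns Es]]]; apply: (Hb P HP); exists s; split => //; split => //.
    by move=> /sub.
  case: (V1 HA Hff Hpr HQ nbQ) => b0 [s [As [ns Qs]]].
  exists s; split => //; split => //.
  have -> : s ^+ n * u = (u * b ^+ n) * (s / b) ^+ n.
    by rewrite exprMn exprVn; field; rewrite expf_neq0.
  by case: (HQ) => HIQ _; apply: (idM HIQ) => //; exact: (Ppow HA HQ Qs n0).
have Au : A u.
  apply: NNPP => nAu.
  pose Du := fun z => A z /\ exists k, A (z ^+ k * u).
  have HDu : radical_ideal A Du.
    split; [split; [|split; [|split]]|].
    - by move=> z [].
    - split; first exact: (sr0 HA).
      by exists 1%N; rewrite expr1 mul0r; exact: (sr0 HA).
    - move=> x y [Ax [m Hm]] [Ay [k Hk]]; split; first exact: (srD HA).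
      exists (m + k)%N.
      apply: (pow_sum (Ip := fun v => A (v * u)) HA) => //.
      + by rewrite mul0r; exact: (sr0 HA).
      + by move=> v w Hv Hw; rewrite mulrDl; apply: (srD HA).
      + by move=> c v Ac Hv; rewrite -mulrA; apply: (srM HA).
    - move=> c x Ac [Ax [m Hm]]; split; first exact: (srM HA).
      exists m; rewrite exprMn -mulrA; apply: (srM HA) => //; exact: (srX _ HA).
    - move=> x j Ax [_ [m Hm]]; split => //.
      by exists (j * m)%N; rewrite exprM.
  case: (decomp HA HN HDu) => [[|Q Lu] [HLup HLue]].
    have := (HLue 1).2 (conj (sr1 HA) (fun P (H : List.In P nil) => match H with end)).
    by move=> [_ [k]]; rewrite expr1n mul1r.
  have HQ : primeI A Q by apply: HLup; left.
  have DuQ : forall z, A z -> A (z * u) -> Q z.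
    move=> z Az Azu; have := (HLue z).1.
    case=> [|_ H]; first by split => //; exists 1%N; rewrite expr1.
    by apply: H; left.
  case: (classic (forall z, A z -> (forall P, List.In P L -> P z) -> Q z)) => HRQ.
    case: (key Q HQ (prime_in_list HA HQ HLp HRQ)) => s [As [ns Qs]].
    apply: ns; apply: (prime_pow HA (n := n) HQ As); apply: DuQ.
      exact: (srX _ HA).
    exact: (id_sub HQ.1 Qs).
  have [z [Az [Hz nQz]]] : exists z, A z /\ (forall P, List.In P L -> P z) /\ ~ Q z.
    apply: NNPP => H; apply: HRQ => z Az Hz; apply: NNPP => nQ; apply: H.
    by exists z.
  have Rz : Rd z by apply/HLe.
  case: (Rz.2 u Bu) => m Hm.
  apply: nQz; apply: (prime_pow HA (n := m) HQ Az); apply: DuQ => //.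
  exact: (srX _ HA).
have Ru : Rd u.
  apply/HLe; split => // P HP.
  have HPp := HLp P HP.
  case: (key P HPp) => [|s [As [ns Ps]]]; first by exists P.
  case: (HPp) => _ [_ PM].
  case: (PM _ _ (srX _ HA As) Au Ps) => // Psn.
  by exfalso; apply: ns; apply: (prime_pow HA HPp As Psn).
exists (fun s => A s /\ s != 0 /\ B s^-1); split.
  by move=> s [As [s0 _]].
split.
  split; first exact: (sr1 HA).
  by split; [exact: oner_neq0|rewrite invr1; exact: (sr1 HB)].
split.
  move=> s t [As [s0 Bs]] [At [t0 Bt]]; split; first exact: (srM HA).
  split; first by rewrite mulf_neq0.
  by rewrite invfM; apply: (srM HB).
move=> x; split.
  move=> Bx; case: (Ru.2 x Bx) => m Hm.
  exists (u ^+ m * x), (u ^+ m); split => //.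
  split; last by field; rewrite expf_neq0.
  split; first exact: (srX _ HA).
  split; first by rewrite expf_neq0.
  by rewrite -exprVn; apply: (srX _ HB).
move=> [a [s [Aa [[As [s0 Bs]] ->]]]].
by apply: (srM HB) => //; apply: AB.
Qed.

Lemma loc_wc : localization_of A B -> well_centered A B.
Proof.
move=> [S [HS [S1 [SM HBS]]]] b Bb.
case: ((HBS b).1 Bb) => a [s [Aa [Ss ->]]].
case: (HS s Ss) => As s0.
exists s; split.
  split; first by apply/HBS; exists s, 1; split => //; split => //; rewrite divr1.
  split => //; apply/HBS; exists 1, s; split; first exact: (sr1 HA).
  by split => //; rewrite div1r.
by rewrite mulrC divfK.
Qed.

Lemma wc_awc : well_centered A B -> almost_well_centered A B.
Proof.
move=> H b Bb; case: (H b Bb) => u [Hu Hub]; exists 1%N, u; split => // .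
Qed.

End Main.
End Aux.

Theorem theorem4p5 (K : fieldType) (A B : K -> Prop) :
  subring A -> is_fraction_field A -> prufer A -> noetherian_spectrum A ->
  overring A B -> fg_algebra A B ->
  (localization_of A B <-> well_centered A B) /\
  (well_centered A B <-> almost_well_centered A B).
Proof.
move=> HA Hff Hpr HN Hov Hfg.
have L2W := @loc_wc K A B HA.
have W2A := @wc_awc K A B.
have A2L := @awc_loc K A B HA Hff Hpr HN Hov Hfg.
split; split; auto.
Qed.
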